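(* Let $\{F_b\}$ be a finite POVM on $\mathbb{C}^d$, let $\mathcal{F}$ be the trace-preserving operation $\mathcal{F}(\rho)=\sum_b F_b^{1/2}\rho F_b^{1/2}$, and let $\mathcal{A}(\rho)=\sum_{b,i}A_{bi}\rho A_{bi}^\dagger$ be any operation with $\sum_iA_{bi}^\dagger A_{bi}=F_b$ for each $b$. Then $$F_e(I/d,\mathcal{A})\le F_e(I/d,\mathcal{F}).$$
   Context: A POVM is a finite family of positive semidefinite operators $F_b$ with $\sum_bF_b=I$. For an operation $\mathcal{A}(\rho)=\sum_kA_k\rho A_k^\dagger$ and density operator $\rho$, the entanglement fidelity is $F_e(\rho,\mathcal{A})=\sum_k|\mathrm{tr}(A_k\rho)|^2$. *)

(* Defs.v *)
(* complex numbers = algC (algebraic complex numbers,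
   a numClosedFieldType).  Matrices on C^d are 'M[algC]_d. *)
From Stdlib Require Import ClassicalEpsilon.
From HB Require Import structures.
From mathcomp Require Import all_boot all_order all_algebra all_field.
Set Implicit Arguments. Unset Strict Implicit. Unset Printing Implicit Defensive.
Import Order.TTheory GRing.Theory Num.Theory.
Local Open Scope ring_scope.

Definition adjmx (m n : nat) (A : 'M[algC]_(m, n)) : 'M[algC]_(n, m) :=
  (map_mx Num.conj A)^T.

(* positive semidefinite: <v, A v> >= 0 for all v (over C this entails
   hermiticity, since 0 <= z in algC means z is a nonnegative real) *)
Definition psdmx (d : nat) (A : 'M[algC]_d) : Prop :=
  forall v : 'cV[algC]_d, 0 <= (adjmx v *m A *m v) 0 0.

Definition povm (d : nat) (B : finType) (F : B -> 'M[algC]_d) : Prop :=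
  (forall b, psdmx (F b)) /\ \sum_(b : B) F b = 1%:M.

(* The PSD square root A^{1/2}: the (unique) PSD matrix S with S*S = A,
   chosen by classical choice (exists whenever A is PSD). *)
Definition psd_sqrt (d : nat) (A : 'M[algC]_d) : 'M[algC]_d :=
  epsilon (inhabits 0) (fun S => psdmx S /\ S *m S = A).

Definition ent_fid (d : nat) (K : finType) (rho : 'M[algC]_d)
  (A : K -> 'M[algC]_d) : algC :=
  \sum_(k : K) `|\tr (A k *m rho)| ^+ 2.

Definition maxmixed (d : nat) : 'M[algC]_d := (d%:R)^-1 *: 1%:M.

(* Main.v *)
From Stdlib Require Import ClassicalEpsilon.
Require Import Defs.
From HB Require Import structures.
From mathcomp Require Import all_boot all_order all_algebra all_field.
From mathcomp Require Import ring.
Import Order.TTheory GRing.Theory Num.Theory.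
Set Implicit Arguments. Unset Strict Implicit.
Local Open Scope ring_scope.

Lemma adjmxM m n p (A : 'M[algC]_(m, n)) (B : 'M[algC]_(n, p)) :
  adjmx (A *m B) = adjmx B *m adjmx A.
Proof. by rewrite /adjmx map_mxM trmx_mul. Qed.

Lemma adjmxK m n (A : 'M[algC]_(m, n)) : adjmx (adjmx A) = A.
Proof. by apply/matrixP=> i j; rewrite !mxE conjCK. Qed.

Lemma adjmxD m n (A B : 'M[algC]_(m, n)) : adjmx (A + B) = adjmx A + adjmx B.
Proof. by apply/matrixP=> i j; rewrite !mxE rmorphD. Qed.

Lemma adjmxZ m n c (A : 'M[algC]_(m, n)) : adjmx (c *: A) = c^* *: adjmx A.
Proof. by apply/matrixP=> i j; rewrite !mxE rmorphM. Qed.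

Lemma adjmx_sum m n (I : finType) (A : I -> 'M[algC]_(m, n)) :
  adjmx (\sum_i A i) = \sum_i adjmx (A i).
Proof. by apply/matrixP=> i j; rewrite !mxE !summxE rmorph_sum; apply: eq_bigr => k _; rewrite !mxE. Qed.

Lemma adjmx_delta n (i : 'I_n) : adjmx (delta_mx i (0 : 'I_1)) = delta_mx 0 i.
Proof. by apply/matrixP=> a b; rewrite !mxE; case: eqP; case: eqP => //= _ _; rewrite ?conjC1 ?conjC0. Qed.

Lemma adjmxE n (P : 'M[algC]_n) : adjmx P = (P ^t* )%sesqui.
Proof. by rewrite /adjmx map_trmx. Qed.

Lemma unitary_adj n (P : 'M[algC]_n) : P \is unitarymx ->
  P *m adjmx P = 1%:M /\ adjmx P *m P = 1%:M.
Proof.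
move=> /unitarymxP; rewrite -adjmxE => h; split => //; exact: mulmx1C.
Qed.

Lemma spectral_adj n (A : 'M[algC]_n) : A \is normalmx ->
  A = adjmx (spectralmx A) *m diag_mx (spectral_diag A) *m spectralmx A.
Proof.
move=> /orthomx_spectralP h; rewrite {1}h invmx_unitary ?spectral_unitarymx //.
by rewrite adjmxE.
Qed.

Definition qf n (M : 'M[algC]_n) (u w : 'cV[algC]_n) := (adjmx u *m M *m w) 0 0.

Lemma qf_delta n (M : 'M[algC]_n) (i j : 'I_n) : qf M (delta_mx i 0) (delta_mx j 0) = M i j.
Proof. by rewrite /qf adjmx_delta -rowE -colE !mxE. Qed.

Lemma qf_lin n (M : 'M[algC]_n) u w c :
  qf M (u + c *: w) (u + c *: w) =
  qf M u u + c * qf M u w + c^* * qf M w u + c^* * c * qf M w w.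
Proof.
rewrite /qf adjmxD adjmxZ !mulmxDl !mulmxDr -!scalemxAl -!scalemxAr !mxE.
rewrite ?scalerA ?mxE; ring.
Qed.

Lemma psd_adj n (M : 'M[algC]_n) : psdmx M -> adjmx M = M.
Proof.
move=> hM; apply/matrixP => i j; rewrite !mxE.
have R v : (qf M v v)^* = qf M v v by apply: geC0_conj; apply: hM.
have Ri := R (delta_mx i 0); have Rj := R (delta_mx j 0).
have R1 := R (delta_mx i 0 + 1 *: delta_mx j 0).
have R2 := R (delta_mx i 0 + 'i *: delta_mx j 0).
rewrite qf_lin !qf_delta in R1; rewrite qf_lin !qf_delta in R2.
rewrite !qf_delta in Ri Rj.
move: R1 R2; rewrite conjC1 !mul1r !rmorphD !rmorphM /= conjCi Ri Rj.
rewrite rmorphN /= conjCi opprK.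
set a := M i j; set b := M j i; set p := M i i; set r := M j j.
move=> E1 E2.
set Y := b^* - a^* - a + b.
have H2 : 'i * Y = (p + - 'i * a^* + 'i * b^* + 'i * - 'i * r) -
   (p + 'i * a + - 'i * b + - 'i * 'i * r) by rewrite /Y; ring.
have H : (b^* - a) *+ 2 = ((p + a^* + b^* + r) - (p + a + b + r))
   - 'i * ('i * Y) + (1 + 'i * 'i) * Y by rewrite /Y; ring.
rewrite H2 E1 E2 !subrr mulr0 subr0 add0r -expr2 sqrCi addrN mul0r in H.
apply/eqP; rewrite -subr_eq0; move/eqP: H; rewrite mulrn_eq0 /=; done.
Qed.

Lemma psd_normal n (M : 'M[algC]_n) : psdmx M -> M \is normalmx.
Proof. by move=> /psd_adj h; apply/normalmxP; rewrite -adjmxE h. Qed.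

Lemma qf_diag n (s : 'rV[algC]_n) (w : 'cV[algC]_n) :
  qf (diag_mx s) w w = \sum_k s 0 k * `|w k 0| ^+ 2.
Proof.
rewrite /qf mul_mx_diag !mxE; apply: eq_bigr => k _.
by rewrite !mxE normCKC mulrAC mulrC. Qed.

Lemma qf_mulmx n (M P : 'M[algC]_n) (v : 'cV[algC]_n) :
  qf (adjmx P *m M *m P) v v = qf M (P *m v) (P *m v).
Proof. by rewrite /qf adjmxM !mulmxA. Qed.

Lemma psd_of_diag n (P : 'M[algC]_n) (s : 'rV[algC]_n) :
  (forall k, 0 <= s 0 k) -> psdmx (adjmx P *m diag_mx s *m P).
Proof.
move=> hs v; rewrite -/(qf _ v v) qf_mulmx qf_diag.
by apply: sumr_ge0 => k _; apply: mulr_ge0 => //; apply: exprn_ge0.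
Qed.

Lemma diag_nonneg n (P : 'M[algC]_n) (s : 'rV[algC]_n) :
  P \is unitarymx -> psdmx (adjmx P *m diag_mx s *m P) -> forall k, 0 <= s 0 k.
Proof.
move=> /unitary_adj [h1 h2] hM k.
have := hM (adjmx P *m delta_mx k 0); rewrite -/(qf _ _ _) qf_mulmx mulmxA h1 mul1mx.
by rewrite qf_delta mxE eqxx mulr1n.
Qed.

Lemma psd_sqrt_ok n (A : 'M[algC]_n) : psdmx A ->
  psdmx (psd_sqrt A) /\ psd_sqrt A *m psd_sqrt A = A.
Proof.
move=> hA; rewrite /psd_sqrt; apply: (epsilon_spec (inhabits 0) (fun S : 'M[algC]_n => psdmx S /\ S *m S = A)).
have hN := psd_normal hA.
have eA := spectral_adj hN.
set P := spectralmx A in eA; set s := spectral_diag A in eA.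
have hP : P \is unitarymx by apply: spectral_unitarymx.
have hs : forall k, 0 <= s 0 k by apply: (diag_nonneg hP); rewrite -eA.
exists (adjmx P *m diag_mx (\row_k sqrtC (s 0 k)) *m P); split.
  by apply: psd_of_diag => k; rewrite mxE sqrtC_ge0.
have [h1 h2] := unitary_adj hP.
rewrite [RHS]eA -!mulmxA; congr (_ *m _); rewrite !mulmxA -[_ *m P *m adjmx P]mulmxA h1 mulmx1.
congr (_ *m _); rewrite mulmx_diag; congr (diag_mx _); apply/rowP => k.
by rewrite !mxE -expr2 sqrtCK.
Qed.

Lemma sq_zero (I : finType) (x : I -> algC) :
  (forall i, 0 <= x i) -> \sum_i x i ^+ 2 <= 0 -> forall i, x i = 0.
Proof.
move=> hx hs i.
have h0 : \sum_i x i ^+ 2 = 0.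
  by apply/le_anti; rewrite hs /=; apply: sumr_ge0 => j _; apply: exprn_ge0.
have := psumr_eq0P (fun j _ => exprn_ge0 2 (hx j)) h0 (i:=i) isT.
by move/eqP; rewrite sqrf_eq0 => /eqP.
Qed.

Lemma cs_pair (I : finType) (x y : I -> algC) (a b : algC) :
  (forall i, 0 <= x i) -> (forall i, 0 <= y i) -> 0 <= a -> 0 <= b ->
  \sum_i x i ^+ 2 <= a ^+ 2 -> \sum_i y i ^+ 2 <= b ^+ 2 ->
  \sum_i x i * y i <= a * b.
Proof.
move=> hx hy ha hb hxa hyb.
have [a0|an0] := eqVneq a 0.
  rewrite a0 expr0n /= in hxa; have := sq_zero hx hxa => x0.
  by rewrite a0 mul0r big1 // => i _; rewrite x0 mul0r.
have [b0|bn0] := eqVneq b 0.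
  rewrite b0 expr0n /= in hyb; have := sq_zero hy hyb => y0.
  by rewrite b0 mulr0 big1 // => i _; rewrite y0 mulr0.
have ap : 0 < a by rewrite lt_def an0.
have bp : 0 < b by rewrite lt_def bn0.
have cp : 0 < (a * b) *+ 2 by rewrite pmulrn_rgt0 // mulr_gt0.
rewrite -(ler_pM2l cp) mulr_sumr.
apply: (le_trans (y := \sum_i (b ^+ 2 * x i ^+ 2 + a ^+ 2 * y i ^+ 2))).
  apply: ler_sum => i _; rewrite -subr_ge0.
  have -> : b ^+ 2 * x i ^+ 2 + a ^+ 2 * y i ^+ 2 - a * b *+ 2 * (x i * y i)
     = (b * x i - a * y i) ^+ 2 by ring.
  rewrite -realEsqr; apply: realB; apply: ger0_real; apply: mulr_ge0 => //.
rewrite big_split /= -!mulr_sumr.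
apply: (le_trans (y := b ^+ 2 * a ^+ 2 + a ^+ 2 * b ^+ 2)).
  apply: lerD; apply: ler_wpM2l => //; apply: exprn_ge0 => //.
by rewrite le_eqVlt; apply/orP; left; apply/eqP; ring.
Qed.

Lemma cs_sum (I K : finType) (x : I -> K -> algC) (s : K -> algC) :
  (forall i k, 0 <= x i k) -> (forall k, 0 <= s k) ->
  (forall k, \sum_i x i k ^+ 2 <= s k ^+ 2) ->
  \sum_i (\sum_k x i k) ^+ 2 <= (\sum_k s k) ^+ 2.
Proof.
move=> hx hs hxs.
have E (f : K -> algC) : (\sum_k f k) ^+ 2 = \sum_k \sum_l f k * f l.
  by rewrite expr2 mulr_suml; apply: eq_bigr => k _; rewrite mulr_sumr.
rewrite E; under eq_bigr do rewrite E.
rewrite exchange_big /=; apply: ler_sum => k _.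
rewrite exchange_big /=; apply: ler_sum => l _.
by apply: cs_pair.
Qed.

Lemma key n (I : finType) (A : I -> 'M[algC]_n) (S : 'M[algC]_n) :
  psdmx S -> S *m S = \sum_i adjmx (A i) *m A i ->
  \sum_i `|\tr (A i)| ^+ 2 <= `|\tr S| ^+ 2.
Proof.
move=> hS eS.
have eP := spectral_adj (psd_normal hS).
set P := spectralmx S in eP; set s := spectral_diag S in eP.
have hP : P \is unitarymx by apply: spectral_unitarymx.
have [h1 h2] := unitary_adj hP.
have hs : forall k, 0 <= s 0 k by apply: (diag_nonneg hP); rewrite -eP.
have c1 m (X : 'M[algC]_(m, n)) : X *m P *m adjmx P = X by rewrite -mulmxA h1 mulmx1.
have c2 m (X : 'M[algC]_(m, n)) : X *m adjmx P *m P = X by rewrite -mulmxA h2 mulmx1.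
pose B i := P *m A i *m adjmx P.
have trB i : \tr (A i) = \tr (B i).
  by rewrite /B mxtrace_mulC mulmxA h2 mul1mx.
have trS : \tr S = \sum_k s 0 k.
  by rewrite eP mxtrace_mulC mulmxA h1 mul1mx mxtrace_diag.
have sumB : \sum_i adjmx (B i) *m B i = diag_mx s *m diag_mx s.
  transitivity (P *m (S *m S) *m adjmx P).
    rewrite eS mulmx_sumr mulmx_suml; apply: eq_bigr => i _.
    by rewrite /B !adjmxM adjmxK !mulmxA c2.
  by rewrite eP !mulmxA h1 mul1mx !c1.
clearbody B.
have ineq k : \sum_i `|B i k k| ^+ 2 <= s 0 k ^+ 2.
  have <- : (\sum_i adjmx (B i) *m B i) k k = s 0 k ^+ 2.
    by rewrite sumB mulmx_diag !mxE eqxx mulr1n expr2.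
  rewrite summxE; apply: ler_sum => i _.
  rewrite !mxE (bigD1 k) //= !mxE -normCKC lerDl.
  by apply: sumr_ge0 => j _; rewrite !mxE -normCKC exprn_ge0.
rewrite trS ger0_norm ?sumr_ge0 //.
apply: (le_trans (y := \sum_i (\sum_k `|B i k k|) ^+ 2)).
  apply: ler_sum => i _; rewrite trB; apply: lerXn2r; rewrite ?nnegrE ?normr_ge0 ?sumr_ge0 //.
  exact: ler_norm_sum.
by apply: cs_sum.
Qed.

Lemma ent_fid_mm d (K : finType) (X : K -> 'M[algC]_d) :
  ent_fid (maxmixed d) X = `|(d%:R : algC)^-1| ^+ 2 * \sum_k `|\tr (X k)| ^+ 2.
Proof.
rewrite /ent_fid /maxmixed mulr_sumr; apply: eq_bigr => k _.
by rewrite -scalemxAr mulmx1 mxtraceZ normrM exprMn.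
Qed.

Theorem mainTheorem10 (d : nat) (B I : finType)
  (F : B -> 'M[algC]_d) (A : B -> I -> 'M[algC]_d) :
  (0 < d)%N ->
  povm F ->
  (forall b : B, \sum_(i : I) adjmx (A b i) *m A b i = F b) ->
  ent_fid (maxmixed d) (fun bi : B * I => A bi.1 bi.2)
    <= ent_fid (maxmixed d) (fun b : B => psd_sqrt (F b)).
Proof.
move=> _ [hpsd _] hA; rewrite !ent_fid_mm.
apply: ler_wpM2l; first exact: exprn_ge0 (normr_ge0 _).
rewrite -(pair_bigA _ (fun b i => `|\tr (A b i)| ^+ 2)) /=.
apply: ler_sum => b _.
have [h1 h2] := psd_sqrt_ok (hpsd b).
by apply: key => //; rewrite h2 hA.
Qed.
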